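(* Let $A_1,\dots,A_m\in\mathbb{C}^{n\times n}$ be Hermitian matrices. There exists $P\in\mathrm{GL}_n(\mathbb{C})$ such that $P^*A_iP$ is diagonal for every $1\le i\le m$ if and only if $Z(A_1,\dots,A_m)$ contains $n$ nonzero matrices $\epsilon_1,\dots,\epsilon_n$ with $\epsilon_j^2=\epsilon_j$, $\epsilon_j\epsilon_l=0$ for $j\neq l$, and $\epsilon_1+\cdots+\epsilon_n=I_n$.
   Context: For Hermitian $A_1,\dots,A_m\in\mathbb{C}^{n\times n}$, the center is $Z(A_1,\dots,A_m)=\{X\in\mathbb{C}^{n\times n} : (A_iX)^*=A_iX \text{ for all } i\}$, where $^*$ denotes conjugate transpose. *)

(* Defs.v *)
From HB Require Import structures.
From mathcomp Require Import all_boot all_order all_algebra.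
From mathcomp Require Import complex.
Set Implicit Arguments. Unset Strict Implicit. Unset Printing Implicit Defensive.
Import Order.TTheory GRing.Theory Num.Theory.
Local Open Scope ring_scope.

(* Complex numbers are R[i] for a real closed field R (R = reals gives C). *)

Definition ctrmx (C : numClosedFieldType) (m n : nat) (A : 'M[C]_(m, n)) : 'M[C]_(n, m) :=
  \matrix_(i < n, j < m) (A j i)^*.

Definition is_hermitian_mx (C : numClosedFieldType) (n : nat) (A : 'M[C]_n) : Prop :=
  ctrmx A = A.

Definition center_set (C : numClosedFieldType) (n m : nat) (A : 'I_m -> 'M[C]_n)
  (X : 'M[C]_n) : Prop :=
  forall i : 'I_m, ctrmx (A i *m X) = A i *m X.

(* Main.v *)
Require Import Defs.
From HB Require Import structures.
From mathcomp Require Import all_boot all_order all_algebra.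
From mathcomp Require Import complex.
Import Order.TTheory GRing.Theory Num.Theory.
Local Open Scope ring_scope.

Section S.
Context {C : numClosedFieldType}.

Lemma ctrmx_mul m n p (X : 'M[C]_(m, n)) (Y : 'M[C]_(n, p)) :
  ctrmx (X *m Y) = ctrmx Y *m ctrmx X.
Proof.
apply/matrixP => i j; rewrite !mxE rmorph_sum; apply: eq_bigr => k _.
by rewrite !mxE rmorphM mulrC.
Qed.

Lemma ctrmx1 n : ctrmx (1%:M : 'M[C]_n) = 1%:M.
Proof. by apply/matrixP => i j; rewrite !mxE rmorph_nat eq_sym. Qed.

Lemma ctrmx_delta n (j : 'I_n) : ctrmx (delta_mx j j : 'M[C]_n) = delta_mx j j.
Proof.
by apply/matrixP => a b; rewrite !mxE rmorph_nat andbC.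
Qed.

Lemma ctrmx_unit n (P : 'M[C]_n) : P \in unitmx -> ctrmx P \in unitmx.
Proof.
move=> uP; have : ctrmx P *m ctrmx (invmx P) = 1%:M.
  by rewrite -ctrmx_mul mulVmx // ctrmx1.
by case/mulmx1_unit.
Qed.
Lemma diag_delta_comm n (D : 'M[C]_n) j : is_diag_mx D ->
  delta_mx j j *m D = D *m delta_mx j j.
Proof.
move=> /is_diag_mxP dD; apply/matrixP => a b; rewrite !mxE.
rewrite (bigD1 j) //= big1 => [|c cj]; last by rewrite !mxE (negPf cj) andbF mul0r.
rewrite [RHS](bigD1 j) //= [in RHS]big1 => [|c cj]; last by rewrite !mxE (negPf cj) mulr0.
rewrite !mxE !eqxx !andbT !addr0.
case: (eqVneq a j) => [->|aj]; case: (eqVneq b j) => [->|bj]; rewrite ?mul1r ?mulr1 ?mul0r ?mulr0 //.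
  by rewrite dD // eq_sym.
by rewrite dD.
Qed.
End S.

Theorem mainTheorem9 (R : rcfType) (n m : nat) (A : 'I_m -> 'M[R[i]]_n)
  (hA : forall k, is_hermitian_mx (A k)) :
  (exists P : 'M[R[i]]_n, P \in unitmx /\
     forall k, is_diag_mx (ctrmx P *m A k *m P))
  <->
  (exists eps : 'I_n -> 'M[R[i]]_n,
     (forall j, center_set A (eps j)) /\
     (forall j, eps j != 0) /\
     (forall j, eps j *m eps j = eps j) /\
     (forall j l, j != l -> eps j *m eps l = 0) /\
     \sum_(j < n) eps j = 1%:M).
Proof.
split.
  case=> P [uP dP].
  have uPc := ctrmx_unit _ _ uP.
  exists (fun j => P *m delta_mx j j *m invmx P).
  split; [|split; [|split; [|split]]].
  - move=> j k.
    set X := ctrmx _; set Y := A k *m _.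
    set D := ctrmx P *m A k *m P.
    have L : ctrmx P *m X *m P = delta_mx j j *m D.
      by rewrite /X /D !ctrmx_mul (hA k) ctrmx_delta !mulmxA -ctrmx_mul mulVmx // ctrmx1 mul1mx.
    have R' : ctrmx P *m Y *m P = D *m delta_mx j j.
      by rewrite /Y /D !mulmxA mulmxKV.
    have H : ctrmx P *m X *m P = ctrmx P *m Y *m P.
      by rewrite L R' diag_delta_comm // /D.
    have := congr1 (fun Z => invmx (ctrmx P) *m Z *m invmx P) H.
    rewrite /= !mulmxA !mulmxK // !mulVmx // !mul1mx. by rewrite /Y !mulmxA.
  - move=> j; apply/eqP => /(congr1 (mulmx (invmx P))).
    rewrite !mulmxA mulVmx // mul1mx mulmx0 => /(congr1 (mulmx^~ P)).
    rewrite mulmxKV // mul0mx => /matrixP /(_ j j).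
    by rewrite !mxE !eqxx /= => /eqP; rewrite oner_eq0.
  - move=> j.
    by rewrite !mulmxA mulmxKV // -(mulmxA P) mul_delta_mx.
  - move=> j l jl.
    rewrite !mulmxA mulmxKV // -(mulmxA P) mul_delta_mx_0 //.
    by rewrite mulmx0 mul0mx.
  - rewrite -mulmx_suml -mulmx_sumr -mx1_sum_delta mulmx1 mulmxV //.
case=> eps [cen [nz [idem [orth _]]]].
have : forall j, exists rc : 'I_n * 'I_n, eps j rc.1 rc.2 != 0.
  move=> j; case: (boolP [exists rc : 'I_n * 'I_n, eps j rc.1 rc.2 != 0]) => [/existsP//|/existsPn H].
  move: (nz j); have -> : eps j = 0; last by rewrite eqxx.
  apply/matrixP => a b; rewrite mxE; have := H (a, b); by rewrite negbK => /eqP.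
case/fin_all_exists => rc Hrc.
pose P := \matrix_(i, l) eps l i (rc l).2.
pose Q := \matrix_(j, i) (eps j (rc j).1 i / eps j (rc j).1 (rc j).2).
have QP : Q *m P = 1%:M.
  apply/matrixP => j l; rewrite [RHS]mxE.
  transitivity ((eps j *m eps l) (rc j).1 (rc l).2 / eps j (rc j).1 (rc j).2).
    rewrite !mxE mulr_suml; apply eq_bigr => i _; rewrite !mxE mulrAC //.
  case: (eqVneq j l) => [<-|jl]; first by rewrite idem divff.
  by rewrite orth // mxE mul0r.
exists P; split; first by case: (mulmx1_unit QP).
move=> k; apply/is_diag_mxP => j l jl.
have -> : (ctrmx P *m A k *m P) j l = (ctrmx (eps j) *m A k *m eps l) (rc j).2 (rc l).2.
  rewrite !mxE; apply eq_bigr => b _; rewrite !mxE; congr (_ * _).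
  by apply eq_bigr => a _; rewrite !mxE.
rewrite -[A k](hA k) -ctrmx_mul (cen j k) -mulmxA orth ?mulmx0 ?mxE //.
Qed.
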